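(* Let $p$ be a prime, $q=p^m$, $\pi\in\mathbb C_p$ a root of $X^{p-1}+p$, and write $\exp(\pi X-\pi X^q)=\sum_{n\ge0}\lambda^{(m)}_nX^n$. Then in $\mathbb Z_p[\zeta_p]$: if $0\le n\le q-1$, $\lambda^{(m)}_n\equiv\frac{\pi^{s_p(n)}}{n!!}\mod\pi^{s_p(n)+p-1}$; if $n\ge q$, $\lambda^{(m)}_n\equiv0\mod\pi^{s_p(n)+p-1}$.
   Context: For $n=n_0+n_1p+\dots+n_tp^t$ with $0\le n_i\le p-1$, $s_p(n)=n_0+\dots+n_t$ and $n!!=n_0!\,n_1!\cdots n_t!$. Note $\mathbb Q_p(\pi)=\mathbb Q_p(\zeta_p)$ and $\pi$ generates the maximal ideal of $\mathbb Z_p[\zeta_p]$. *)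

(* Defs.v *)
From HB Require Import structures.
From mathcomp Require Import all_boot all_order all_algebra.
Set Implicit Arguments. Unset Strict Implicit. Unset Printing Implicit Defensive.
Import Order.TTheory GRing.Theory Num.Theory.
Local Open Scope ring_scope.

(* Base-p digits: n = \sum_i digit p n i * p^i (digits beyond index n vanish). *)
Definition digit (p n i : nat) : nat := (n %/ p ^ i) %% p.

Definition sp (p n : nat) : nat := (\sum_(i < n.+1) digit p n i)%N.

Definition dfact (p n : nat) : nat := (\prod_(i < n.+1) (digit p n i)`!)%N.

Definition p_integral (p : nat) (c : rat) : bool := ~~ (p %| `|denq c|)%N.

(* Elements of Q(pi) = Q[X]/(X^(p-1)+p) are represented by polynomials in
   pi (the variable 'X), pi being a root of X^(p-1)+p.
   pi_cong p k A B  <->  A(pi) = B(pi) mod pi^k in Z_p[pi] = Z_p[zeta_p],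
   i.e. A(pi) - B(pi) = pi^k * W(pi) with W having p-integral coefficients. *)
Definition pi_cong (p k : nat) (A B : {poly rat}) : Prop :=
  exists W : {poly rat}, (forall i, p_integral p W`_i) /\
    ('X^(p.-1) + (p%:R)%:P) %| (A - B - 'X^k * W).

(* The series exp(pi X - pi X^q), q = p^m, as a polynomial in X whose
   coefficients are polynomials in pi (inner variable).  Its n-th coefficient
   lambda^(m)_n is the coefficient of X^n in \sum_(k<=n) f^k / k!, where
   f = pi X - pi X^q (terms with k > n do not contribute since f(0) = 0). *)
Definition expf (p m : nat) : {poly {poly rat}} :=
  ('X%:P) * 'X - ('X%:P) * 'X^(p ^ m).

Definition lambda (p m n : nat) : {poly rat} :=
  (\sum_(k < n.+1) (((k`!)%:R : rat)^-1)%:P%:P * (expf p m) ^+ k)`_n.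

(* Main.v *)
Require Import Defs.
From HB Require Import structures.
From mathcomp Require Import all_boot all_order all_algebra.
From mathcomp Require Import ring zify.
Import Order.TTheory GRing.Theory Num.Theory.
Local Open Scope ring_scope.


Section PI.
Variable p : nat.
Hypothesis pP : prime p.

Lemma pintP (c : rat) :
  p_integral p c <-> exists (z : int) (d : nat), ~~ (p %| d)%N /\ c * d%:R = z%:~R.
Proof.
split.
- move=> H; exists (numq c), `|denq c|%N; split => //.
  by rewrite numqE natr_absz gtr0_norm ?denq_gt0.
- move=> [z [d [pd E]]]; rewrite /p_integral; apply/negP => pden.
  have E2 : (numq c * d%:Z = z * denq c)%R.
    apply: (@intr_inj rat).
    rewrite !rmorphM /= numqE -E; rewrite -[(d%:Z)%:~R]/(d%:R) //=.
    by rewrite mulrAC.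
  have : (`|denq c| %| `|numq c| * d)%N.
    apply/dvdnP; exists `|z|%N.
    by rewrite -abszM -E2 abszM.
  rewrite Gauss_dvdr; last by rewrite coprime_sym coprime_num_den.
  move=> dd; apply: (negP pd); exact: dvdn_trans pden dd.
Qed.
Local Notation pint := (p_integral p).
Local Notation p_gt1 := (prime_gt1 pP).
Local Notation p_gt0 := (prime_gt0 pP).

Lemma pndvd1 : ~~ (p %| 1)%N.
Proof. by rewrite dvdn1; apply/eqP => h; move: (prime_gt1 pP); rewrite h. Qed.

Lemma pint_int (z : int) : pint z%:~R.
Proof. apply/pintP; exists z, 1%N; split; [exact: pndvd1 | by rewrite mulr1]. Qed.

Lemma pint_nat (n : nat) : pint n%:R.
Proof. exact: (pint_int n). Qed.

Lemma pint_add a b : pint a -> pint b -> pint (a + b).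
Proof.
move=> /pintP [z1 [d1 [h1 e1]]] /pintP [z2 [d2 [h2 e2]]].
apply/pintP; exists (z1 * d2%:Z + z2 * d1%:Z), (d1 * d2)%N; split.
  by rewrite Euclid_dvdM // negb_or h1 h2.
rewrite natrM rmorphD !rmorphM /= -e1 -e2.
rewrite -[(d1%:Z)%:~R]/(d1%:R) -[(d2%:Z)%:~R]/(d2%:R). ring.
Qed.

Lemma pint_mul a b : pint a -> pint b -> pint (a * b).
Proof.
move=> /pintP [z1 [d1 [h1 e1]]] /pintP [z2 [d2 [h2 e2]]].
apply/pintP; exists (z1 * z2), (d1 * d2)%N; split.
  by rewrite Euclid_dvdM // negb_or h1 h2.
rewrite natrM rmorphM /= -e1 -e2. ring.
Qed.

Lemma pint_opp a : pint a -> pint (- a).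
Proof. by move=> h; rewrite -mulN1r; apply: pint_mul => //; exact: (pint_int (-1)). Qed.

Lemma pint_sub a b : pint a -> pint b -> pint (a - b).
Proof. by move=> ha hb; apply: pint_add => //; apply: pint_opp. Qed.

Lemma pint_sign e : pint ((-1) ^+ e).
Proof. elim: e => [|e ih]; first exact: (pint_int 1).
by rewrite exprS; apply: pint_mul => //; exact: (pint_int (-1)). Qed.

Lemma pint_invn (d : nat) : ~~ (p %| d)%N -> pint (d%:R)^-1.
Proof.
move=> hd; apply/pintP; exists 1, d; split => //.
rewrite mulVf //; rewrite pnatr_eq0; apply/eqP => h; move: hd; by rewrite h dvdn0.
Qed.

Lemma pint_divp (n : nat) : pint (n%:R / p%:R) -> (p %| n)%N.
Proof.
move=> /pintP [z [d [hd e]]].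
have pn0 : (p%:R : rat) != 0 by rewrite pnatr_eq0 -lt0n prime_gt0.
have E : ((n * d)%N%:Z = p%:Z * z)%R.
  apply: (@intr_inj rat); rewrite PoszM !intrM -e.
  rewrite -[((n%:Z))%:~R]/(n%:R) -[(d%:Z)%:~R]/(d%:R) -[(p%:Z)%:~R]/(p%:R).
  by field.
have : (p %| n * d)%N.
  apply/dvdnP; exists `|z|%N; move: (congr1 absz E); rewrite !abszM /= => ->; apply: mulnC.
by rewrite Euclid_dvdM // (negbTE hd) orbF.
Qed.


Lemma digit0 n : digit p n 0 = (n %% p)%N.
Proof. by rewrite /digit expn0 divn1. Qed.

Lemma digitS n i : digit p n i.+1 = digit p (n %/ p) i.
Proof. by rewrite /digit expnS divnMA. Qed.

Lemma digit_big n i : (n <= i)%N -> digit p n i = 0%N.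
Proof.
move=> h; rewrite /digit divn_small ?mod0n //.
exact: leq_ltn_trans h (ltn_expl _ p_gt1).
Qed.

Lemma sum_ext n K : (n <= K)%N ->
  (\sum_(i < K) digit p n i)%N = (\sum_(i < n) digit p n i)%N.
Proof.
elim: K => [|K ih]; first by rewrite leqn0 => /eqP ->.
rewrite leq_eqVlt => /orP [/eqP -> //|h].
by rewrite big_ord_recr /= digit_big // addn0 ih.
Qed.

Lemma prod_ext n K : (n <= K)%N ->
  (\prod_(i < K) (digit p n i)`!)%N = (\prod_(i < n) (digit p n i)`!)%N.
Proof.
elim: K => [|K ih]; first by rewrite leqn0 => /eqP ->.
rewrite leq_eqVlt => /orP [/eqP -> //|h].
by rewrite big_ord_recr /= digit_big // muln1 ih.
Qed.

Lemma sp_rec n : sp p n = (n %% p + sp p (n %/ p))%N.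
Proof.
rewrite /sp big_ord_recl digit0; congr addn.
rewrite (eq_bigr (fun i : 'I_n => digit p (n %/ p) i)); last first.
  by move=> i _; rewrite lift0 digitS.
by rewrite (@sum_ext _ _ (leq_div n p)) (@sum_ext _ _ (leqnSn _)).
Qed.

Lemma dfact_rec n : dfact p n = ((n %% p)`! * dfact p (n %/ p))%N.
Proof.
rewrite /dfact big_ord_recl digit0; congr muln.
rewrite (eq_bigr (fun i : 'I_n => (digit p (n %/ p) i)`!)); last first.
  by move=> i _; rewrite lift0 digitS.
by rewrite (@prod_ext _ _ (leq_div n p)) (@prod_ext _ _ (leqnSn _)).
Qed.

Lemma sp0 : sp p 0 = 0%N.
Proof. by rewrite /sp big_ord_recl big_ord0 digit0 mod0n. Qed.

Lemma dfact0 : dfact p 0 = 1%N.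
Proof. by rewrite /dfact big_ord_recl big_ord0 digit0 mod0n. Qed.

Lemma sp_split m x y : (x < p ^ m)%N -> sp p (x + p ^ m * y) = (sp p x + sp p y)%N.
Proof.
elim: m x y => [|m ih] x y.
  by rewrite expn0 ltnS leqn0 => /eqP ->; rewrite sp0 mul1n.
move=> hx; rewrite sp_rec [sp p x]sp_rec.
have -> : (x + p ^ m.+1 * y = (p ^ m * y) * p + x)%N by rewrite expnS; ring.
rewrite modnMDl (divnMDl _ _ p_gt0) [(_ + x %/ p)%N]addnC ih; first by rewrite addnA.
by rewrite (ltn_divLR _ _ p_gt0) -expnSr.
Qed.

Lemma dfact_split m x y : (x < p ^ m)%N ->
  dfact p (x + p ^ m * y) = (dfact p x * dfact p y)%N.
Proof.
elim: m x y => [|m ih] x y.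
  by rewrite expn0 ltnS leqn0 => /eqP ->; rewrite dfact0 !mul1n.
move=> hx; rewrite dfact_rec [dfact p x]dfact_rec.
have -> : (x + p ^ m.+1 * y = (p ^ m * y) * p + x)%N by rewrite expnS; ring.
rewrite modnMDl (divnMDl _ _ p_gt0) [(_ + x %/ p)%N]addnC ih; first by rewrite mulnA.
by rewrite (ltn_divLR _ _ p_gt0) -expnSr.
Qed.

Lemma fact_ndvd k : (k < p)%N -> ~~ (p %| k`!)%N.
Proof.
elim: k => [|k ih] h; first by rewrite fact0 pndvd1.
rewrite factS Euclid_dvdM // negb_or ih ?(ltnW h) // andbT.
apply/negP => /(dvdn_leq (ltn0Sn k)); by rewrite leqNgt h.
Qed.

Lemma dfact_ndvd n : ~~ (p %| dfact p n)%N.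
Proof.
rewrite /dfact.
apply: (big_ind (fun x => ~~ (p %| x)%N)) => [|a b ha hb|i _].
- exact: pndvd1.
- by rewrite (Euclid_dvdM _ _ pP) negb_or ha hb.
- apply: fact_ndvd; exact: ltn_pmod _ p_gt0.
Qed.


Ltac pit := repeat first [assumption | exact: pint_sign | exact: pint_nat | apply: pint_mul | apply: pint_add | apply: pint_opp].

Definition cong (x y : rat) := exists t, pint t /\ x = y + p%:R * t.

Lemma cong_refl x : cong x x.
Proof. exists 0; split; [exact: (pint_int 0) | by rewrite mulr0 addr0]. Qed.

Lemma cong_trans x y z : cong x y -> cong y z -> cong x z.
Proof.
move=> [t1 [h1 e1]] [t2 [h2 e2]]; exists (t1 + t2); split; first exact: pint_add.
by rewrite e1 e2; ring.
Qed.

Lemma cong_mul x1 y1 x2 y2 : pint y1 -> pint y2 -> cong x1 y1 -> cong x2 y2 ->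
  cong (x1 * x2) (y1 * y2).
Proof.
move=> i1 i2 [t1 [h1 e1]] [t2 [h2 e2]].
exists (t1 * y2 + y1 * t2 + p%:R * t1 * t2); split; last by rewrite e1 e2; ring.
apply: pint_add; [apply: pint_add|]; apply: pint_mul => //.
by apply: pint_mul => //; exact: pint_nat.
Qed.

Definition Pr a k := (\prod_(j < k) (a + j.+1))%N.

Lemma fact_add a k : (a + k)`! = (a`! * Pr a k)%N.
Proof.
elim: k => [|k ih]; first by rewrite addn0 /Pr big_ord0 muln1.
rewrite addnS factS ih /Pr big_ord_recr /=; ring.
Qed.

Lemma Pr_cong a k : (p %| a)%N -> cong (Pr a k)%:R (k`!)%:R.
Proof.
move=> /dvdnP [j ->]; elim: k => [|k ih].
  by rewrite /Pr big_ord0 fact0; exact: cong_refl.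
rewrite /Pr big_ord_recr /= factS natrM [(k.+1`!)%:R]natrM mulrC.
apply: cong_mul => //; try exact: pint_nat.
exists j%:R; split; first exact: pint_nat.
by rewrite natrD natrM addrC mulrC.
Qed.

Lemma Wcong : cong ((p.-1)`!)%:R (-1).
Proof.
have : (p %| (p.-1)`!.+1)%N by rewrite -(Wilson p_gt1).
move=> /dvdnP [k hk]; exists k%:R; split; first exact: pint_nat.
have : ((p.-1)`!.+1)%:R = (k * p)%N%:R :> rat by rewrite hk.
rewrite -addn1 natrD natrM => h.
apply: (@addIr _ 1); rewrite h; ring.
Qed.

Lemma F1 N : exists R : nat, (N * p)`! = (p ^ N * N`! * R)%N /\ cong R%:R ((-1) ^+ N).
Proof.
elim: N => [|N [R [e c]]].
  by exists 1%N; split; [rewrite mul0n expn0 fact0 | rewrite expr0; exact: cong_refl].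
exists (R * Pr (N * p) p.-1)%N; split.
  rewrite mulSn addnC fact_add e.
  have -> : Pr (N * p) p = (Pr (N * p) p.-1 * (N * p + p))%N.
    have h : Pr (N * p) p.-1.+1 = (Pr (N * p) p.-1 * (N * p + p.-1.+1))%N.
      by rewrite /Pr big_ord_recr.
    by rewrite (prednK p_gt0) in h.
  rewrite factS expnS; ring.
rewrite natrM exprS mulrC.
apply: cong_mul; try exact: pint_sign; try exact: (pint_int (-1)) => //.
apply: cong_trans (Pr_cong _ _ _) Wcong; exact: dvdn_mull.
exact: c.
Qed.

Lemma FD n1 : exists e w, n1`! = (p ^ e * w)%N /\ ((p - 1) * e + sp p n1 = n1)%N /\
  cong w%:R ((-1) ^+ e * (dfact p n1)%:R).
Proof.
elim: n1.+1 {-2}n1 (ltnSn n1) => // K ih n hn.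
case: (posnP n) => [->|npos].
  exists 0%N, 1%N; rewrite sp0 dfact0 muln0 expr0 mulr1; split => //; split => //.
  exact: cong_refl.
have hM : (n %/ p < K)%N by apply: leq_trans (ltn_Pdiv p_gt1 npos) _.
have [e' [w' [ew [es ec]]]] := ih _ hM.
have [R [eR cR]] := F1 (n %/ p).
exists (n %/ p + e')%N, (w' * R * Pr (n %/ p * p) (n %% p))%N.
have dn := divn_eq n p.
split.
  rewrite {1}dn fact_add eR ew expnD; ring.
split.
  rewrite sp_rec mulnDr.
  have : ((p - 1) * (n %/ p) + n %/ p = n %/ p * p)%N.
    by rewrite mulnBl mul1n mulnC subnK // (leq_pmulr _ p_gt0).
  move: es dn.
  set a := ((p - 1) * (n %/ p))%N; set b := ((p - 1) * e')%N; set c := (n %/ p * p)%N.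
  set d := (n %/ p)%N; set f := (n %% p)%N.
  lia.
rewrite dfact_rec !natrM exprD.
have -> : (-1) ^+ (n %/ p) * (-1) ^+ e' * ((n %% p)`!%:R * (dfact p (n %/ p))%:R) =
   ((-1) ^+ e' * (dfact p (n %/ p))%:R * (-1) ^+ (n %/ p)) * (n %% p)`!%:R :> rat by ring.
apply: cong_mul; pit.
  apply: cong_mul => //; pit.
apply: Pr_cong; exact: dvdn_mull.
Qed.

Lemma sign_sq e : (-1) ^+ e * (-1) ^+ e = 1 :> rat.
Proof. by rewrite -exprMn mulrNN mulr1 expr1n. Qed.

Lemma ndvd_w e w d : cong w%:R ((-1) ^+ e * d%:R) -> ~~ (p %| d)%N -> ~~ (p %| w)%N.
Proof.
move=> [t [ht h]] hd; apply/negP => /dvdnP [k hk]; apply: (negP hd).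
apply: pint_divp.
have pn0 : (p%:R : rat) != 0 by rewrite pnatr_eq0 -lt0n prime_gt0.
have -> : d%:R / p%:R = (-1) ^+ e * (k%:R - t) :> rat.
  apply: (@mulIf _ p%:R) => //.
  have h2 : (-1) ^+ e * d%:R = w%:R - p%:R * t :> rat by rewrite h; ring.
  rewrite mulfVK //.
  transitivity ((-1) ^+ e * ((-1) ^+ e * d%:R) : rat); first by rewrite mulrA sign_sq mul1r.
  rewrite h2 hk natrM; ring.
by pit.
Qed.

Lemma sp_sub x y : (sp p (x + y) <= sp p x + sp p y)%N.
Proof.
have [ex [wx [fx [sx cx]]]] := FD x.
have [ey [wy [fy [sy cy]]]] := FD y.
have [e [w [f [s c]]]] := FD (x + y).
have nw := @ndvd_w _ _ _ c (dfact_ndvd _).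
have hle : (ex + ey <= e)%N.
  have : (p ^ (ex + ey) %| p ^ e * w)%N.
    rewrite -f -(bin_fact (leq_addr y x)) addKn expnD fx fy.
    apply: dvdn_mull; apply: dvdn_mul; exact: dvdn_mulr.
  move=> h2; rewrite leqNgt; apply/negP => hlt.
  have h1 : (p ^ e.+1 %| p ^ (ex + ey))%N by rewrite dvdn_exp2l.
  have := dvdn_trans h1 h2.
  by rewrite expnS mulnC dvdn_pmul2l ?expn_gt0 ?p_gt0 // (negbTE nw).
have : ((p - 1) * (ex + ey) <= (p - 1) * e)%N by rewrite leq_mul2l hle orbT.
rewrite mulnDr; move: sx sy s.
set a := ((p - 1) * ex)%N; set b := ((p - 1) * ey)%N; set g := ((p - 1) * e)%N.
lia.
Qed.

Definition Pp : {poly rat} := 'X^(p.-1) + (p%:R)%:P.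
Definition intp (W : {poly rat}) := forall i, pint W`_i.
Definition Id K (A : {poly rat}) := exists W, intp W /\ Pp %| A - 'X^K * W.

Lemma intp0 : intp 0.
Proof. by move=> i; rewrite coef0; exact: (pint_int 0). Qed.

Lemma intpD A B : intp A -> intp B -> intp (A + B).
Proof. by move=> ha hb i; rewrite coefD; apply: pint_add. Qed.

Lemma intpN A : intp A -> intp (- A).
Proof. by move=> ha i; rewrite coefN; apply: pint_opp. Qed.

Lemma intpM A B : intp A -> intp B -> intp (A * B).
Proof.
move=> ha hb i; rewrite coefM; apply: (big_ind pint) => //.
- exact: (pint_int 0).
- exact: pint_add.
- by move=> j _; apply: pint_mul.
Qed.

Lemma intpXn n : intp 'X^n.
Proof. by move=> i; rewrite coefXn; exact: pint_nat. Qed.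

Lemma intpC c : pint c -> intp c%:P.
Proof. by move=> h i; rewrite coefC; case: (i == 0)%N => //; exact: (pint_int 0). Qed.

Lemma intpZ c A : pint c -> intp A -> intp (c *: A).
Proof. by move=> hc ha i; rewrite coefZ; apply: pint_mul. Qed.

Lemma Id0 K : Id K 0.
Proof. by exists 0; split; [exact: intp0 | rewrite mulr0 subr0 dvdp0]. Qed.

Lemma IdD K A B : Id K A -> Id K B -> Id K (A + B).
Proof.
move=> [W1 [h1 d1]] [W2 [h2 d2]]; exists (W1 + W2); split; first exact: intpD.
have -> : A + B - 'X^K * (W1 + W2) = (A - 'X^K * W1) + (B - 'X^K * W2) by ring.
exact: dvdp_add.
Qed.

Lemma IdN K A : Id K A -> Id K (- A).
Proof.
move=> [W1 [h1 d1]]; exists (- W1); split; first exact: intpN.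
have -> : - A - 'X^K * (- W1) = 0 - (A - 'X^K * W1) by ring.
by apply: dvdp_sub => //; exact: dvdp0.
Qed.

Lemma IdB K A B : Id K A -> Id K B -> Id K (A - B).
Proof. by move=> ha hb; apply: IdD => //; apply: IdN. Qed.

Lemma Id_sum K (I : finType) (F : I -> {poly rat}) :
  (forall i, Id K (F i)) -> Id K (\sum_i F i).
Proof. by move=> h; apply: (big_ind (Id K)) => //; [exact: Id0 | exact: IdD]. Qed.

Lemma IdW K K' A : (K' <= K)%N -> Id K A -> Id K' A.
Proof.
move=> hk [W [h d]]; exists ('X^(K - K') * W); split.
  by apply: intpM => //; exact: intpXn.
by rewrite mulrA -exprD subnKC.
Qed.

Lemma IdM K L A B : Id K A -> Id L B -> Id (K + L) (A * B).
Proof.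
move=> [W1 [h1 d1]] [W2 [h2 d2]]; exists (W1 * W2); split; first exact: intpM.
have -> : A * B - 'X^(K + L) * (W1 * W2) =
   (A - 'X^K * W1) * B + ('X^K * W1) * (B - 'X^L * W2) by rewrite exprD; ring.
by apply: dvdp_add; [apply: dvdp_mulr | apply: dvdp_mull].
Qed.

Lemma IdZ K c A : pint c -> Id K A -> Id K (c *: A).
Proof.
move=> hc [W [h d]]; exists (c *: W); split; first exact: intpZ.
rewrite -scalerAr -scalerBr -mul_polyC; exact: dvdp_mull.
Qed.

Lemma Idmon K V : intp V -> Id K ('X^K * V).
Proof. by move=> h; exists V; split => //; rewrite subrr dvdp0. Qed.

Lemma Ideqv K A A' : Pp %| A - A' -> Id K A' -> Id K A.
Proof.
move=> d [W [h d']]; exists W; split => //.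
have -> : A - 'X^K * W = (A - A') + (A' - 'X^K * W) by ring.
exact: dvdp_add.
Qed.

Lemma Xpow e : Pp %| 'X^(p.-1 * e)%N - ((- p%:R) ^+ e)%:P.
Proof.
rewrite exprM rmorphXn /= subrXX; apply: dvdp_mulr.
have -> : 'X^(p.-1) - (- p%:R)%:P = Pp by rewrite /Pp polyCN opprK.
exact: dvdpp.
Qed.

Lemma Idp K c : pint c -> Id (K + p.-1) ((p%:R * c) *: 'X^K).
Proof.
move=> hc; apply: (@Ideqv _ _ ('X^(K + p.-1) * (- c)%:P)).
  have -> : (p%:R * c) *: 'X^K - 'X^(K + p.-1) * (- c)%:P = ('X^K * c%:P) * Pp.
    by rewrite /Pp exprD -mul_polyC polyCM polyCN; ring.
  exact: dvdp_mull (dvdpp _).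
by apply: Idmon; apply: intpC; apply: pint_opp.
Qed.

Definition F a : {poly rat} := ((a`!)%:R)^-1 *: 'X^a.
Definition D a : {poly rat} := ((dfact p a)%:R)^-1 *: 'X^(sp p a).

Lemma nat_neq0 (n : nat) : ~~ (p %| n)%N -> (n%:R : rat) != 0.
Proof. by move=> h; rewrite pnatr_eq0; apply/eqP => e; move: h; rewrite e dvdn0. Qed.

Lemma D_Id a : Id (sp p a) (D a).
Proof.
rewrite /D -mul_polyC mulrC; apply: Idmon; apply: intpC; apply: pint_invn.
exact: dfact_ndvd.
Qed.

Lemma G a : Id (sp p a + p.-1) (F a - D a).
Proof.
have [e [w [fa [sa ca]]]] := FD a.
have nw := @ndvd_w _ _ _ ca (dfact_ndvd _).
have [t [ht et]] := ca.
set s := sp p a in sa *; set d := dfact p a in et *.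
have nd : ~~ (p %| d)%N by exact: dfact_ndvd.
have w0 := @nat_neq0 _ nw; have d0 := @nat_neq0 _ nd.
have p0 : p%:R != 0 :> rat by rewrite pnatr_eq0 -lt0n prime_gt0.
set c1 := (-1) ^+ e / w%:R : rat.
have key : ((a`!)%:R)^-1 * (- p%:R) ^+ e = c1.
  rewrite fa natrM natrX exprNn /c1 invfM; field.
  by rewrite w0 expf_neq0.
have ha : a = (s + p.-1 * e)%N by rewrite -sa -subn1 addnC.
apply: (@Ideqv _ _ ((c1 - (d%:R)^-1) *: 'X^s)).
  have -> : F a - D a - (c1 - (d%:R)^-1) *: 'X^s =
     ((a`!)%:R)^-1 *: 'X^s * ('X^(p.-1 * e)%N - ((- p%:R) ^+ e)%:P).
    rewrite /F /D -/s -/d [in 'X^a]ha exprD -!mul_polyC -key polyCB polyCM.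
    ring.
  exact: dvdp_mull (Xpow e).
have -> : c1 - (d%:R)^-1 = p%:R * (- (t * (w%:R * d%:R)^-1)).
  have h1 : c1 - (d%:R)^-1 = ((-1) ^+ e * d%:R - w%:R) / (w%:R * d%:R).
    by rewrite /c1; field; rewrite w0 d0.
  have h2 : (-1) ^+ e * d%:R - w%:R = - (p%:R * t) :> rat by rewrite et; ring.
  by rewrite h1 h2; field; rewrite w0 d0.
apply: Idp; apply: pint_opp; apply: pint_mul => //; rewrite -natrM; apply: pint_invn.
by rewrite Euclid_dvdM // negb_or nw nd.
Qed.
End PI.



Lemma coefY (R : comNzRingType) r k n : (k <= n)%N ->
  (('X - 'X^(r.+1) : {poly R}) ^+ k)`_n =
  \sum_(b < k.+1) ((-1) ^+ b * ((n - k == r * b)%N)%:R) *+ 'C(k, b).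
Proof.
move=> hk.
have -> : ('X - 'X^(r.+1) : {poly R}) = 'X * (- 'X^r + 1) by rewrite exprS; ring.
rewrite exprMn exprD1n coefXnM ltnNge hk /= coef_sum; apply: eq_bigr => b _.
rewrite coefMn [in LHS]exprNn -exprM.
have -> : (-1) ^+ b = ((-1) ^+ b)%:P :> {poly R} by rewrite polyC_exp polyCN polyC1.
by rewrite coefCM coefXn.
Qed.

Lemma sum_ext0 (R : nmodType) (F : nat -> R) k n : (k <= n)%N ->
  (forall b, (k < b)%N -> F b = 0) ->
  \sum_(b < k.+1) F b = \sum_(b < n.+1) F b.
Proof.
move=> hk hF; elim: n hk => [|n ih]; first by rewrite leqn0 => /eqP ->.
rewrite leq_eqVlt => /orP [/eqP -> //|h].
by rewrite [in RHS]big_ord_recr /= (hF n.+1 h) addr0 (ih h).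
Qed.

Definition term r n k b : {poly rat} :=
  (((k`!)%:R)^-1 * (-1) ^+ b * ('C(k, b))%:R * ((n - k == r * b)%N)%:R) *: 'X^k.

Definition T q n b : {poly rat} :=
  if (q * b <= n)%N then ((-1) ^+ b / ((n - q * b)`!%:R * (b`!)%:R)) *: 'X^(n - q * b + b)
  else 0.

Lemma lambda_eq1 p m n : (0 < p ^ m)%N ->
  lambda p m n = \sum_(k < n.+1) \sum_(b < n.+1) term (p ^ m).-1 n k b.
Proof.
move=> hq; set r := (p ^ m).-1.
rewrite /lambda coef_sum; apply: eq_bigr => k _.
have hk : (k <= n)%N by rewrite -ltnS.
have -> : expf p m = 'X%:P * ('X - 'X^(r.+1)) by rewrite /expf /r prednK // mulrBr.
rewrite exprMn -rmorphXn /= mulrA -polyCM coefCM coefY // mulr_sumr.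
rewrite (@sum_ext0 _ (fun b => ((k`!)%:R^-1)%:P * 'X^k *
   ((-1) ^+ b * ((n - k == r * b)%N)%:R *+ 'C(k, b)) : {poly rat}) k n) //; last first.
  by move=> b hb; rewrite bin_small // mulr0n mulr0.
apply: eq_bigr => b _.
rewrite /term -mul_polyC.
have -> : ((-1) ^+ b * ((n - k == r * b)%N)%:R) *+ 'C(k, b) =
   (((-1) ^+ b * ((n - k == r * b)%N)%:R) *+ 'C(k, b))%:P :> {poly rat}.
  by rewrite polyCMn polyCM polyC_exp polyCN polyC1 polyC_natr.
rewrite -mulrA [_ * (_)%:P]mulrC mulrA -polyCM; congr (_%:P * _).
by rewrite -mulr_natr; ring.
Qed.

Lemma fact_neq0 k : (k`!%:R : rat) != 0.
Proof. by rewrite pnatr_eq0 -lt0n fact_gt0. Qed.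

Lemma term_sum r n b : \sum_(k < n.+1) term r n k b = T r.+1 n b.
Proof.
have qb : (r.+1 * b = b + r * b)%N by rewrite mulSn.
case: (leqP (r * b) n) => hrb; last first.
  rewrite big1; last first.
    move=> k _; rewrite /term.
    have -> : (n - k == r * b)%N = false.
      apply/negP => /eqP h; move: hrb; rewrite -h; have := leq_subr k n; lia.
    by rewrite mulr0 scale0r.
  by rewrite /T qb; case: ifP => // h; move: hrb; lia.
have hk0 : (n - r * b < n.+1)%N by rewrite ltnS leq_subr.
rewrite (bigD1 (Ordinal hk0)) //= big1 ?addr0; last first.
  move=> k hk; rewrite /term.
  have -> : (n - k == r * b)%N = false.
    apply/negP => /eqP h; move: hk => /eqP; apply; apply: val_inj => /=.
    have := ltn_ord k; lia.
  by rewrite mulr0 scale0r.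
rewrite /term /T qb subKn // eqxx mulr1.
case: ifP => h.
  have hb : (b <= n - r * b)%N by lia.
  have e1 : (n - r * b - b = n - (b + r * b))%N by lia.
  have e2 : (n - r * b = n - (b + r * b) + b)%N by lia.
  rewrite -e2; congr (_ *: _).
  have := bin_fact hb; rewrite e1 => hf.
  rewrite -{1}hf !natrM; field.
  by rewrite !fact_neq0 /= pnatr_eq0 -lt0n bin_gt0 hb.
move/negbT: h; rewrite -ltnNge => h.
by rewrite bin_small ?mulr0 ?scale0r //; lia.
Qed.

Lemma lambda_eq p m n : (0 < p ^ m)%N ->
  lambda p m n = \sum_(b < n.+1) T (p ^ m) n b.
Proof.
move=> hq; rewrite lambda_eq1 // exchange_big /=; apply: eq_bigr => b _.
by rewrite term_sum prednK.
Qed.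

Lemma alt_sum N : (0 < N)%N ->
  \sum_(b < N.+1) (-1) ^+ b * (((N - b)`!)%:R * (b`!)%:R)^-1 = 0 :> rat.
Proof.
move=> hN.
have : \sum_(b < N.+1) (-1) ^+ b *+ 'C(N, b) = 0 :> rat.
  by rewrite -exprD1n addNr expr0n eqn0Ngt hN.
move=> h; apply: (@mulfI _ (N`!)%:R); first exact: fact_neq0.
rewrite mulr0 mulr_sumr -[RHS]h; apply: eq_bigr => b _.
have hb : (b <= N)%N by rewrite -ltnS.
rewrite -(bin_fact hb) !natrM -mulr_natr; field.
by rewrite !fact_neq0.
Qed.

Section Main.
Variable p : nat.
Hypothesis pP : prime p.

Lemma F_Id a : Id p (sp p a) (F a).
Proof.
have -> : F a = (F a - D p a) + D p a by rewrite subrK.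
apply: (IdD p pP); last exact: D_Id p pP a.
exact: (IdW p pP _ _ _ (leq_addr _ _) (G p pP a)).
Qed.

Lemma FM x y : F x * F y = (((x`!)%:R)^-1 * ((y`!)%:R)^-1) *: 'X^(x + y).
Proof. by rewrite /F -scalerAl -scalerAr scalerA exprD. Qed.

Lemma DM m x y : (x < p ^ m)%N -> D p (x + p ^ m * y) = D p x * D p y.
Proof.
move=> hx; rewrite /D.
rewrite (sp_split p pP _ _ _ hx) (dfact_split p pP _ _ _ hx) -scalerAl -scalerAr scalerA exprD.
by rewrite natrM invfM.
Qed.
End Main.

Theorem lemma1p1 (p m n : nat) : prime p ->
  ((n <= p ^ m - 1)%N ->
     pi_cong p (sp p n + (p - 1)) (lambda p m n)
             (((dfact p n)%:R : rat)^-1 *: 'X^(sp p n))) /\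
  ((p ^ m <= n)%N ->
     pi_cong p (sp p n + (p - 1)) (lambda p m n) 0).
Proof.
move=> pP.
have hq : (0 < p ^ m)%N by rewrite expn_gt0 prime_gt0.
rewrite !subn1; split => hn.
  change (Id p (sp p n + p.-1)%N (lambda p m n - (((dfact p n)%:R : rat)^-1 *: 'X^(sp p n)))).

  rewrite lambda_eq // big_ord_recl big1 ?addr0; last first.
    move=> i _; rewrite /T ifF //; apply/negbTE; rewrite -ltnNge.
    apply: leq_trans (leq_pmulr _ (ltn0Sn _)); lia.
  rewrite /T muln0 subn0 addn0 /= expr0 fact0 mulr1 div1r.
  exact: G p pP n.
change (Id p (sp p n + p.-1)%N (lambda p m n - 0)); rewrite subr0 lambda_eq //.
set q := (p ^ m)%N in hq hn *.
set N := (n %/ q)%N; set nl := (n %% q)%N.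
have hN : (0 < N)%N by rewrite /N leq_divRL // mul1n.
have hnl : (nl < q)%N by rewrite /nl ltn_pmod.
have dn : n = (nl + q * N)%N by rewrite /nl /N addnC mulnC -divn_eq.
have TN b : (N < b)%N -> T q n b = 0.
  move=> hb; rewrite /T ifF //; apply/negbTE; rewrite -ltnNge mulnC -ltn_divLR //.
rewrite -(@sum_ext0 _ (T q n) N n) ?leq_div //.
set R := fun b : nat => (-1) ^+ b *: (D p nl * (F (N - b) * F b)).
have -> : \sum_(b < N.+1) T q n b = \sum_(b < N.+1) (T q n b - R b) + \sum_(b < N.+1) R b.
  by rewrite -big_split; apply: eq_bigr => b _; rewrite /= subrK.
have -> : \sum_(b < N.+1) R b = 0.
  rewrite (eq_bigr (fun b : 'I_N.+1 =>
     ((-1) ^+ b * (((N - b)`!)%:R * (b`!)%:R)^-1) *: (D p nl * 'X^N))); last first.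
    move=> b _; have hb : (b <= N)%N by rewrite -ltnS.
    by rewrite /R FM subnK // -scalerAr scalerA invfM.
  by rewrite -scaler_suml alt_sum // scale0r.
rewrite addr0; apply: (Id_sum p pP) => b.
have hb : (b <= N)%N by rewrite -ltnS.
set a := (n - q * b)%N.
have hqb : (q * b <= q * N)%N by rewrite leq_mul2l hb orbT.
have ha : a = (nl + q * (N - b))%N by rewrite /a mulnBr dn; lia.
have -> : T q n b = (-1) ^+ b *: (F a * F b).
  rewrite /T ifT; last by rewrite dn; lia.
  by rewrite FM scalerA invfM mulrA.
rewrite /R -scalerBr; apply: (IdZ p pP); first exact: pint_sign.
have -> : F a * F b - D p nl * (F (N - b) * F b) =
    (F a - D p a) * F b + D p nl * (- (F (N - b) - D p (N - b)) * F b).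
  have hDa : D p a = D p nl * D p (N - b) by rewrite ha; exact: (DM p pP _ _ _ hnl).
  rewrite hDa; ring.
have s1 : sp p n = (sp p nl + sp p N)%N by rewrite {1}dn (sp_split p pP _ _ _ hnl).
have s2 : sp p a = (sp p nl + sp p (N - b))%N by rewrite ha (sp_split p pP _ _ _ hnl).
have s3 : (sp p N <= sp p (N - b) + sp p b)%N.
  by rewrite -{1}(subnK hb) sp_sub.
apply: (IdD p pP).
  apply: (IdW p pP _ _ _ _ (IdM p pP _ _ _ _ (G p pP a) (F_Id p pP b))); lia.
apply: (IdW p pP _ _ _ _ (IdM p pP _ _ _ _ (D_Id p pP nl)
         (IdM p pP _ _ _ _ (IdN p pP _ _ (G p pP (N - b))) (F_Id p pP b)))); lia.
Qed.
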